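(* Let $E$ be a finite set, $w\geq 1$ an integer and $e\in E$. Then: (i) the map $\mathcal{R}_e:[0,\infty)^{E\setminus\{e\}}\to(0,1]$ is non-increasing in each variable; (ii) the map $\mathcal{D}:[0,\infty)^E\to[0,|E|)$ is strictly increasing in each variable; (iii) for every $\mathbf{X}\in(0,\infty)^E$ (all coordinates positive), the map $z\in[0,\infty)\mapsto z\,\mathcal{R}_e(z\mathbf{X})$ is strictly increasing, where $z\mathbf{X}$ is the vector with entries $zX_f$.
   Context: Let $E$ be a finite set and $w$ a positive integer. For $\mathbf{Y}=(Y_f)_{f\in E}\in[0,\infty)^E$ and $S\subseteq E$ write $\mathbf{Y}^S=\prod_{f\in S}Y_f$ (with $\mathbf{Y}^\emptyset=1$). For $e\in E$ define $$\mathcal{R}_e(\mathbf{Y})=\frac{\sum_{S\subseteq E\setminus\{e\},\,|S|\leq w-1}\mathbf{Y}^S}{\sum_{S\subseteq E\setminus\{e\},\,|S|\leq w}\mathbf{Y}^S},$$ which depends only on the coordinates $Y_f$, $f\neq e$, and define $$\mathcal{D}(\mathbf{Y})=\sum_{e\in E}\frac{Y_e\mathcal{R}_e(\mathbf{Y})}{1+Y_e\mathcal{R}_e(\mathbf{Y})}.$$ *)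

(* Defs.v *)
(* the statement is purely algebraic/order-theoretic, so we
   state it over an arbitrary real field R. *)
From HB Require Import structures.
From mathcomp Require Import all_boot all_order all_algebra.
Set Implicit Arguments. Unset Strict Implicit. Unset Printing Implicit Defensive.
Import Order.TTheory GRing.Theory Num.Theory.
Local Open Scope ring_scope.

Definition monom (R : realFieldType) (E : finType) (Y : E -> R) (S : {set E}) : R :=
  \prod_(f in S) Y f.

Definition elsum (R : realFieldType) (E : finType) (e : E) (k : nat) (Y : E -> R) : R :=
  \sum_(S : {set E} | (e \notin S) && (#|S| <= k)%N) monom Y S.

(* R_e(Y); w is a positive integer so w-1 = w.-1 *)
Definition Rfun (R : realFieldType) (E : finType) (w : nat) (e : E) (Y : E -> R) : R :=
  elsum e w.-1 Y / elsum e w Y.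

Definition Dfun (R : realFieldType) (E : finType) (w : nat) (Y : E -> R) : R :=
  \sum_(e : E) (Y e * Rfun w e Y) / (1 + Y e * Rfun w e Y).

(* Main.v *)
Require Import Defs.
From HB Require Import structures.
From mathcomp Require Import all_boot all_order all_algebra.
From mathcomp Require Import ring lra.
Import Order.TTheory GRing.Theory Num.Theory.
Local Open Scope ring_scope.
Set Implicit Arguments. Unset Strict Implicit.
Section S.
Variables (R : realFieldType) (E : finType).
Implicit Types (Y : E -> R) (A : {set E}).

Definition sz Y A (p : pred nat) : R :=
  \sum_(S : {set E} | (S \subset A) && p #|S|) monom Y S.
Definition cs Y A k := sz Y A (fun n => (n < k)%N).
Definition hs Y A k := sz Y A (fun n => n.+1 == k).

Lemma monomU1 Y (x : E) (T : {set E}) : x \notin T -> monom Y (x |: T) = Y x * monom Y T.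
Proof. by move=> hx; rewrite /monom big_setU1. Qed.

Lemma sz_rec Y A p (x : E) : x \notin A ->
  sz Y (x |: A) p = sz Y A p + Y x * sz Y A (fun n => p n.+1).
Proof.
move=> xA; rewrite /sz (bigID (fun S : {set E} => x \in S)) /= addrC; congr (_ + _).
  apply eq_bigl => S; rewrite andbAC; congr (_ && _).
  apply/idP/idP.
    case/andP=> /subsetP sS xS; apply/subsetP => y yS.
    have := sS y yS; rewrite !inE; case/orP=> // /eqP ey.
    by rewrite -ey yS in xS.
  move=> /subsetP sS; apply/andP; split.
    by apply/subsetP => y /sS yA; rewrite !inE yA orbT.
  by apply/negP => /sS; rewrite (negPf xA).
rewrite big_distrr /=.
rewrite (reindex_onto (fun T => x |: T) (fun S => S :\ x)); last first.
  by move=> S /andP[_ xS]; rewrite setD1K.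
apply: eq_big => T.
  case xT: (x \in T).
    have h1 : ((x |: T) :\ x == T) = false.
      by apply/negbTE/negP => /eqP e; move: xT; rewrite -e setD11.
    have h2 : (T \subset A) = false.
      by apply/negbTE/negP => /subsetP s; move: (s x xT); rewrite (negPf xA).
    by rewrite h1 h2 andbF.
  rewrite setU1K ?xT // eqxx andbT setU11 andbT cardsU1 xT /=.
  congr (_ && _); apply/idP/idP.
    move=> /subsetP sT; apply/subsetP => y yT.
    have := sT y; rewrite !inE yT orbT => /(_ isT) /orP[/eqP ey|//].
    by rewrite -ey yT in xT.
  by move=> sT; rewrite setUS.
case/andP=> /andP[_ _] /eqP hT.
have xT : x \notin T by rewrite -hT setD11.
by rewrite monomU1.
Qed.

Lemma sz_set0 Y p : sz Y set0 p = if p 0%N then 1 else 0.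
Proof.
rewrite /sz; case: ifP => hp.
  rewrite (big_pred1 set0) ?/monom ?big_set0 // => S.
  rewrite subset0 /=; case: eqP => [->|//]; by rewrite cards0 hp.
rewrite big_pred0 // => S; rewrite subset0; case: eqP => [->|//].
by rewrite cards0 hp.
Qed.

Lemma set_induction (P : {set E} -> Prop) :
  P set0 -> (forall x A, x \notin A -> P A -> P (x |: A)) -> forall A, P A.
Proof.
move=> H0 HS A; move: {2}#|A| (erefl #|A|) => n.
elim: n A => [|n IH] A hA; first by rewrite (cards0_eq hA).
have: A != set0 by apply/negP => /eqP e; rewrite e cards0 in hA.
case/set0Pn => x xA; rewrite -(setD1K xA); apply: HS; first by rewrite setD11.
by apply: IH; move: hA; rewrite (cardsD1 x) xA add1n => -[].
Qed.

Lemma cs_rec Y A (x : E) k : x \notin A ->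
  cs Y (x |: A) k.+1 = cs Y A k.+1 + Y x * cs Y A k.
Proof. by move=> xA; rewrite /cs sz_rec. Qed.

Lemma hs_rec Y A (x : E) k : x \notin A ->
  hs Y (x |: A) k.+1 = hs Y A k.+1 + Y x * hs Y A k.
Proof. by move=> xA; rewrite /hs sz_rec. Qed.

Lemma cs0 Y A : cs Y A 0 = 0.
Proof. by rewrite /cs /sz big_pred0 // => S; rewrite ltn0 andbF. Qed.

Lemma hs0 Y A : hs Y A 0 = 0.
Proof. by rewrite /hs /sz big_pred0 // => S; rewrite andbF. Qed.

Lemma sz_ge0 Y A p : (forall g, 0 <= Y g) -> 0 <= sz Y A p.
Proof. by move=> hY; apply: sumr_ge0 => S _; apply: prodr_ge0. Qed.

Lemma sz_mono Y A (p q : pred nat) : (forall g, 0 <= Y g) ->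
  (forall n, p n -> q n) -> sz Y A p <= sz Y A q.
Proof.
move=> hY pq; rewrite [sz Y A q](bigID (fun S : {set E} => p #|S|)) /=.
have -> : \sum_(i : {set E} | ((i \subset A) && q #|i|) && p #|i|) monom Y i = sz Y A p.
  apply: eq_bigl => S; case: (p _) (pq #|S|) => [->|]; by rewrite ?andbT ?andbF.
by rewrite lerDl; apply: sumr_ge0 => S _; apply: prodr_ge0.
Qed.

Lemma cs1 Y A : cs Y A 1 = 1.
Proof.
elim/set_induction: A => [|x A xA IH]; first by rewrite /cs sz_set0.
by rewrite cs_rec // IH cs0 mulr0 addr0.
Qed.

Lemma hs1 Y A : hs Y A 1 = 1.
Proof.
elim/set_induction: A => [|x A xA IH]; first by rewrite /hs sz_set0.
by rewrite hs_rec // IH hs0 mulr0 addr0.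
Qed.

Lemma cs_ge1 Y A k : (forall g, 0 <= Y g) -> 1 <= cs Y A k.+1.
Proof. by move=> hY; rewrite -(cs1 Y A) /cs; apply: sz_mono => // n; rewrite ltnS ltnS leqn0 => /eqP ->. Qed.

Lemma cs_mono Y A i j : (forall g, 0 <= Y g) -> (i <= j)%N -> cs Y A i <= cs Y A j.
Proof. by move=> hY ij; apply: sz_mono => // n /leq_trans; apply. Qed.

Lemma sz_ext Y Y' A p : (forall g, g \in A -> Y' g = Y g) -> sz Y' A p = sz Y A p.
Proof.
move=> h; apply: eq_bigr => S /andP[/subsetP sS _].
by apply: eq_bigr => g /sS; apply: h.
Qed.

End S.
Section Seq.
Variable R : realFieldType.
Implicit Types g : nat -> R.

Definition SLC g := forall a b, (a <= b)%N -> g a * g b.+2 <= g a.+1 * g b.+1.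

Lemma SLC_step g g' (x : R) : 0 <= x -> (forall k, 0 <= g k) -> g 0%N = 0 ->
  g' 0%N = 0 -> (forall k, g' k.+1 = g k.+1 + x * g k) -> SLC g -> SLC g'.
Proof.
move=> hx hg g0 g'0 hrec H a b ab.
have g'ge0 k : 0 <= g' k.
  by case: k => [|k]; rewrite ?g'0 // hrec; apply: addr_ge0 => //; apply: mulr_ge0.
case: a ab => [|a] ab; first by rewrite g'0 mul0r; apply: mulr_ge0.
case: b ab => [|b] ab //.
rewrite !hrec.
have H1 := H a.+1 b.+1 ab.
have H3 := H a b ab.
have H2 : g a * g b.+3 <= g a.+2 * g b.+1.
  case: (ltnP a b) => hab.
    apply: le_trans (H a b.+1 (leqW (ltnW hab))) _.
    exact: H a.+1 b hab.
  have eab : a = b by apply: anti_leq; rewrite hab andbT; exact: ab.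
  by rewrite -eab mulrC [X in _ <= X]mulrC mulrC; exact: (H a a.+1 (leqnSn a)).
have h2 : 0 <= x * (g a.+2 * g b.+1 - g a * g b.+3).
  by apply: mulr_ge0 => //; rewrite subr_ge0.
have h3 : 0 <= (x * x) * (g a.+1 * g b.+1 - g a * g b.+2).
  by apply: mulr_ge0; [apply: mulr_ge0|rewrite subr_ge0].
lra.
Qed.

Lemma Kineq g : g 0%N = 0 -> (forall k, 0 <= g k) ->
  (forall i j, (i <= j)%N -> g i <= g j) -> 0 < g 1%N ->
  (forall k, g k * g k.+2 <= g k.+1 * g k.+1) ->
  forall n, (g n.+2 - g n.+1) * \sum_(m < n.+1) g m <= g n.+1 * g n.+1 - g n.+1 * g 1%N.
Proof.
move=> g0 hg hm g1 lc; elim => [|n IH].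
  by rewrite big_ord_recl big_ord0 g0 addr0 mulr0 subrr.
rewrite big_ord_recr /=.
set S := \sum_(i < n.+1) g i in IH *.
set a := g n.+1 in IH *; set b := g n.+2 in IH *; set d := g n.+3.
set c1 := g 1%N in IH *.
have S0 : 0 <= S by apply: sumr_ge0.
have a0 : 0 < a by apply: lt_le_trans g1 (hm _ _ _).
have ab : a <= b by apply: hm.
have c1b : c1 <= b by apply: hm.
have ad : a * d <= b * b by apply: lc.
case: (lerP d b) => db.
  have : (d - b) * (S + a) <= 0.
    by apply: mulr_le0_ge0; rewrite ?subr_le0 //; apply: addr_ge0 => //; apply: ltW.
  have : 0 <= b * (b - c1).
    by apply: mulr_ge0; [apply: le_trans (ltW a0) ab|rewrite subr_ge0].
  lra.
rewrite -(ler_pM2l a0).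
have h1 : a * (d - b) <= b * (b - a) by lra.
have h2 := ler_wpM2r (addr_ge0 S0 (ltW a0)) h1.
have h3 := ler_wpM2l (le_trans (ltW a0) ab) IH.
have e1 : a * ((d - b) * (S + a)) = a * (d - b) * (S + a) by ring.
have e2 : b * (b - a) * (S + a) = b * ((b - a) * S) + b * (b - a) * a by ring.
lra.
Qed.

(* monotone likelihood ratio argument for (iii) *)
Lemma MLR g (n : nat) (z1 z2 : R) : g 0%N = 0 -> g 1%N = 1 -> (forall k, 0 <= g k) ->
  SLC g -> 0 <= z1 -> z1 < z2 ->
  (\sum_(j < n.+2) z1 ^+ j * g j) * (\sum_(j < n.+2) z2 ^+ j * g j.+1) <
  (\sum_(j < n.+2) z2 ^+ j * g j) * (\sum_(j < n.+2) z1 ^+ j * g j.+1).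
Proof.
move=> g0 g1 hg H hz1 hz.
set t := fun j k : nat => g j * g k.+1 * (z2 ^+ j * z1 ^+ k - z1 ^+ j * z2 ^+ k).
set u := fun j k : nat => (g j * g k.+1 - g k * g j.+1) * (z2 ^+ j * z1 ^+ k - z1 ^+ j * z2 ^+ k).
have hz2 : 0 <= z2 by apply: le_trans hz1 (ltW hz).
have usign j k : (j <= k)%N -> 0 <= u j k.
  move=> jk; apply: mulr_le0.
    rewrite subr_le0; case: (ltnP j k) => hjk.
      case: k jk hjk => [//|k] jk hjk.
      by rewrite [g k.+1 * _]mulrC; exact: H.
    have -> : k = j by apply/eqP; rewrite eqn_leq jk hjk.
    by rewrite mulrC.
  rewrite subr_le0 -(subnKC jk) !exprD.
  set m := (k - j)%N.
  have -> : z2 ^+ j * (z1 ^+ j * z1 ^+ m) = (z1 ^+ j * z2 ^+ j) * z1 ^+ m by ring.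
  have -> : z1 ^+ j * (z2 ^+ j * z2 ^+ m) = (z1 ^+ j * z2 ^+ j) * z2 ^+ m by ring.
  apply: ler_wpM2l; first by apply: mulr_ge0; apply: exprn_ge0.
  by apply: lerXn2r; rewrite ?nnegrE //; apply: ltW.
have uge0 j k : 0 <= u j k.
  case: (leqP j k) => jk; first by apply: usign.
  have -> : u j k = u k j by rewrite /u; ring.
  by apply: usign; apply: ltnW.
have u01 : 0 < u 0%N 1%N by rewrite /u g0 g1 !expr0 !expr1; lra.
have : 0 < \sum_(j < n.+2) \sum_(k < n.+2) u j k.
  have row0 : 0 < \sum_(k < n.+2) u 0%N k.
    rewrite (bigD1 (Ordinal (isT : (1 < n.+2)%N))) //=.
    apply: lt_le_trans u01 _; rewrite lerDl; apply: sumr_ge0 => k _; exact: uge0.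
  rewrite big_ord_recl /=; apply: lt_le_trans row0 _; rewrite lerDl.
  by apply: sumr_ge0 => i _; apply: sumr_ge0 => k _; exact: uge0.
have -> : \sum_(j < n.+2) \sum_(k < n.+2) u j k =
    \sum_(j < n.+2) \sum_(k < n.+2) t j k + \sum_(j < n.+2) \sum_(k < n.+2) t k j.
  rewrite -big_split /=; apply: eq_bigr => j _; rewrite -big_split /=.
  by apply: eq_bigr => k _; rewrite /u /t; ring.
rewrite [X in _ + X]exchange_big /=.
have -> : \sum_(j < n.+2) \sum_(k < n.+2) t j k =
    (\sum_(j < n.+2) z2 ^+ j * g j) * (\sum_(j < n.+2) z1 ^+ j * g j.+1) -
    (\sum_(j < n.+2) z1 ^+ j * g j) * (\sum_(j < n.+2) z2 ^+ j * g j.+1).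
  rewrite !big_distrlr /= -sumrB; apply: eq_bigr => j _; rewrite -sumrB.
  by apply: eq_bigr => k _; rewrite /t; ring.
lra.
Qed.

End Seq.
Section Main.
Variables (R : realFieldType) (E : finType).
Implicit Types (Y : E -> R) (A : {set E}).

Lemma cs_SLC Y A : (forall g, 0 <= Y g) -> SLC (cs Y A).
Proof.
move=> hY; elim/set_induction: A => [|x A xA IH].
  move=> a b _; rewrite /cs !sz_set0 /= !mulr1.
  by case: ifP => _; rewrite ?ler01 ?lexx.
apply: (SLC_step (g := cs Y A)) (hY x) _ _ _ _ IH => //.
- by move=> k; apply: sz_ge0.
- by rewrite cs0.
- by rewrite cs0.
- by move=> k; rewrite cs_rec.
Qed.

Lemma hs_SLC Y A : (forall g, 0 <= Y g) -> SLC (hs Y A).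
Proof.
move=> hY; elim/set_induction: A => [|x A xA IH].
  move=> a b _; rewrite /hs !sz_set0 /= mulr0.
  by case: ifP => _; case: ifP => _; rewrite ?mulr1 ?mulr0 ?ler01.
apply: (SLC_step (g := hs Y A)) (hY x) _ _ _ _ IH => //.
- by move=> k; apply: sz_ge0.
- by rewrite hs0.
- by rewrite hs0.
- by move=> k; rewrite hs_rec.
Qed.

Definition Mf Y A k := \sum_(e in A) Y e * cs Y (A :\ e) k.

Lemma sum_shift (g : nat -> R) k : \sum_(m < k.+1) g m = g 0%N + \sum_(m < k) g m.+1.
Proof. by rewrite big_ord_recl. Qed.

Lemma MZ Y A k : Mf Y A k = k%:R * cs Y A k.+1 - \sum_(m < k.+1) cs Y A m.
Proof.
elim/set_induction: A k => [|x A xA IH] k.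
  rewrite /Mf big_set0 sum_shift /cs sz_set0 /=.
  under eq_bigr do rewrite sz_set0 /=.
  by rewrite sz_set0 /= sumr_const card_ord mulr1 add0r subrr.
case: k => [|k].
  rewrite /Mf big1 ?sum_shift ?big_ord0 ?cs0 ?mul0r ?addr0 ?subrr //.
  by move=> e _; rewrite cs0 mulr0.
have hD e : e \in A -> (x |: A) :\ e = x |: (A :\ e).
  move=> eA; have xe : x != e by apply/eqP => xe; rewrite xe eA in xA.
  by apply/setP => y; rewrite !inE; case: (y =P x) => [->|_]; rewrite ?xe.
have L : Mf Y (x |: A) k.+1 = Y x * cs Y A k.+1 + Mf Y A k.+1 + Y x * Mf Y A k.
  rewrite /Mf big_setU1 //= setU1K // -addrA; congr (_ + _).
  rewrite big_distrr -big_split /=; apply: eq_bigr => e eA.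
  rewrite hD // cs_rec; last by rewrite !inE negb_and xA orbT.
  ring.
rewrite L !IH !sum_shift !cs0 !add0r.
under [X in _ = _ - X]eq_bigr do rewrite cs_rec //.
rewrite big_split /= -big_distrr /= cs_rec //.
rewrite sum_shift cs0 add0r.
rewrite -[k.+1%:R]/(1 *+ k.+1) mulrSr.
ring.
Qed.

Lemma cs_ext Y Y' (B : {set E}) k : (forall g, g \in B -> Y' g = Y g) -> cs Y' B k = cs Y B k.
Proof. exact: sz_ext. Qed.

Lemma Mf_ext Y Y' (B : {set E}) k : (forall g, g \in B -> Y' g = Y g) -> Mf Y' B k = Mf Y B k.
Proof.
move=> h; apply: eq_bigr => e eB; rewrite h // (cs_ext (Y := Y)) // => g.
by rewrite inE => /andP[_ /h].
Qed.

Lemma elsum_cs Y (e : E) k : elsum e k Y = cs Y (~: [set e]) k.+1.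
Proof.
rewrite /elsum /cs /sz; apply: eq_bigl => S; congr (_ && _).
by rewrite subsetC sub1set inE.
Qed.

Lemma Rfun_cs Y (e : E) n :
  Rfun n.+1 e Y = cs Y (~: [set e]) n.+1 / cs Y (~: [set e]) n.+2.
Proof. by rewrite /Rfun !elsum_cs. Qed.

Lemma setT_split (e : E) : [set: E] = e |: ~: [set e].
Proof. by apply/setP => y; rewrite !inE; case: (y == e). Qed.

Lemma notin_C1 (e : E) : e \notin ~: [set e].
Proof. by rewrite !inE eqxx. Qed.

Lemma frac_le (p q r s : R) : 0 < q -> 0 < s -> p * s <= r * q -> p / q <= r / s.
Proof. by move=> q0 s0 h; rewrite ler_pdivrMr // mulrAC ler_pdivlMr. Qed.

Lemma frac_lt (p q r s : R) : 0 < q -> 0 < s -> p * s < r * q -> p / q < r / s.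
Proof. by move=> q0 s0 h; rewrite ltr_pdivrMr // mulrAC ltr_pdivlMr. Qed.

Lemma Rfun_pos Y (e : E) n : (forall g, 0 <= Y g) ->
  0 < Rfun n.+1 e Y /\ Rfun n.+1 e Y <= 1.
Proof.
move=> hY; rewrite Rfun_cs.
have a1 := cs_ge1 (~: [set e]) n hY.
have ab := @cs_mono _ _ Y (~: [set e]) n.+1 n.+2 hY (leqnSn _).
split; first by apply: divr_gt0; apply: lt_le_trans ltr01 _ => //; apply: le_trans a1 ab.
by rewrite ler_pdivrMr ?mul1r //; apply: lt_le_trans ltr01 (le_trans a1 ab).
Qed.

End Main.
Section Main2.
Variables (R : realFieldType) (E : finType).
Implicit Types (Y : E -> R) (A : {set E}).

Lemma term_eq Y (e : E) n : (forall g, 0 <= Y g) ->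
  Y e * Rfun n.+1 e Y / (1 + Y e * Rfun n.+1 e Y) =
  Y e * cs Y (~: [set e]) n.+1 / cs Y [set: E] n.+2.
Proof.
move=> hY; rewrite Rfun_cs [in RHS](setT_split e) cs_rec ?notin_C1 //.
set a := cs Y _ n.+1; set b := cs Y _ n.+2.
have b0 : 0 < b by apply: lt_le_trans ltr01 (cs_ge1 _ _ hY).
have a0 : 0 <= a by apply: sz_ge0.
have ya : 0 <= Y e * a by apply: mulr_ge0.
have h1 : b != 0 by rewrite gt_eqF.
have h2 : b + Y e * a != 0 by rewrite gt_eqF //; lra.
have h3 : 1 + Y e * (a / b) != 0.
  rewrite gt_eqF //; have : 0 <= Y e * (a / b) by apply: mulr_ge0 => //; apply: divr_ge0 => //; apply: ltW.
  lra.
by clearbody a b; field; rewrite h1 h2.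
Qed.

Lemma Dfun_split Y (f : E) n : (forall g, 0 <= Y g) ->
  Dfun n.+1 Y =
  (Y f * cs Y (~: [set f]) n.+1 + (Mf Y (~: [set f]) n.+1 + Y f * Mf Y (~: [set f]) n)) /
  (cs Y (~: [set f]) n.+2 + Y f * cs Y (~: [set f]) n.+1).
Proof.
move=> hY; rewrite /Dfun.
under eq_bigr do rewrite term_eq //.
rewrite -mulr_suml (setT_split f) cs_rec ?notin_C1 //; congr (_ / _).
rewrite (bigD1 f) //=; congr (_ + _).
have HM k : Mf Y (~: [set f]) k = \sum_(e | e != f) Y e * cs Y (~: [set f] :\ e) k.
  by rewrite /Mf; apply: eq_bigl => e; rewrite !inE.
rewrite !HM.
rewrite big_distrr -big_split /=; apply: eq_bigr => e ef.
have -> : ~: [set e] = f |: (~: [set f] :\ e).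
  apply/setP => y; rewrite !inE; case: (y =P f) => [->|_] /=; first by rewrite eq_sym.
  by rewrite andbT.
rewrite cs_rec; last by rewrite !inE eqxx andbF.
ring.
Qed.

Lemma sz_part Y A k :
  sz Y A (fun n => (n < k)%N) = \sum_(j < k) sz Y A (fun n => n == j).
Proof.
elim: k => [|k IH]; first by rewrite big_ord0 /sz big_pred0 // => S; rewrite ltn0 andbF.
rewrite big_ord_recr -IH /= /sz (bigID (fun S : {set E} => (#|S| < k)%N)) /=.
congr (_ + _); apply: eq_bigl => S; rewrite -andbA; congr (_ && _).
  by case: (ltnP #|S| k) => h; rewrite ?andbT ?andbF // ltnS ltnW.
by rewrite ltnS -leqNgt -eqn_leq.
Qed.

Lemma cs_scale (X : E -> R) (z : R) A k :
  cs (fun g => z * X g) A k = \sum_(j < k) z ^+ j * hs X A j.+1.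
Proof.
rewrite /cs sz_part; apply: eq_bigr => j _.
rewrite /hs /sz big_distrr /=; apply: eq_big => S //.
move=> /andP[_ /eqP <-].
by rewrite /monom big_split /= prodr_const.
Qed.

End Main2.

Theorem proposition1 (R : realFieldType) (E : finType) (w : nat) (e : E) :
  (0 < w)%N ->
  ((forall Y : E -> R, (forall g, 0 <= Y g) ->
      0 < Rfun w e Y /\ Rfun w e Y <= 1) /\
   (forall (Y Y' : E -> R) (f : E), f != e ->
      (forall g, 0 <= Y g) -> (forall g, 0 <= Y' g) ->
      (forall g, g != f -> Y' g = Y g) -> Y f <= Y' f ->
      Rfun w e Y' <= Rfun w e Y)) /\
  ((forall Y : E -> R, (forall g, 0 <= Y g) ->
      0 <= Dfun w Y /\ Dfun w Y < #|E|%:R) /\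
   (forall (Y Y' : E -> R) (f : E),
      (forall g, 0 <= Y g) -> (forall g, 0 <= Y' g) ->
      (forall g, g != f -> Y' g = Y g) -> Y f < Y' f ->
      Dfun w Y < Dfun w Y')) /\
  (forall X : E -> R, (forall g, 0 < X g) ->
     forall z1 z2 : R, 0 <= z1 -> z1 < z2 ->
       z1 * Rfun w e (fun g => z1 * X g) < z2 * Rfun w e (fun g => z2 * X g)).
Proof.
case: w => // n _.
split; [split|split; [split|]].
- by move=> Y hY; apply: Rfun_pos.
- move=> Y Y' f fe hY hY' hYY' hf.
  have fA : f \in ~: [set e] by rewrite !inE.
  rewrite !Rfun_cs -(setD1K fA) !cs_rec ?setD11 //.
  have ext k : cs Y' (~: [set e] :\ f) k = cs Y (~: [set e] :\ f) k.
    by apply: cs_ext => g; rewrite !inE => /andP[gf _]; apply: hYY'.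
  rewrite !ext.
  set B := ~: [set e] :\ f.
  have H := cs_SLC B hY (leqnn n).
  set a := cs Y B n.+1 in H *; set b := cs Y B n in H *; set d := cs Y B n.+2 in H *.
  have a0 : 0 <= a by apply: sz_ge0.
  have b0 : 0 <= b by apply: sz_ge0.
  have d1 : 1 <= d by apply: cs_ge1.
  have y0 := hY f; have y'0 := hY' f.
  have := mulr_ge0 y0 a0; have := mulr_ge0 y'0 a0 => h1 h2.
  apply: frac_le; try lra.
  have : 0 <= (Y' f - Y f) * (a * a - b * d) by apply: mulr_ge0; rewrite subr_ge0.
  lra.
- move=> Y hY; rewrite /Dfun.
  have t01 g : 0 <= Y g * Rfun n.+1 g Y / (1 + Y g * Rfun n.+1 g Y) /\
               Y g * Rfun n.+1 g Y / (1 + Y g * Rfun n.+1 g Y) < 1.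
    have [r0 _] := Rfun_pos g n hY.
    have x0 : 0 <= Y g * Rfun n.+1 g Y by apply: mulr_ge0 => //; apply: ltW.
    split; first by apply: divr_ge0 => //; lra.
    by rewrite ltr_pdivrMr; lra.
  split; first by apply: sumr_ge0 => g _; case: (t01 g).
  rewrite -[#|E|%:R]sumr_const (bigD1 e) //= [X in _ < X](bigD1 e) //=.
  apply: ltr_leD; first by case: (t01 e).
  by apply: ler_sum => g _; case: (t01 g) => _ /ltW.
- move=> Y Y' f hY hY' hYY' hf.
  rewrite (Dfun_split f n hY) (Dfun_split f n hY').
  have ext g : g \in ~: [set f] -> Y' g = Y g by rewrite !inE => /hYY'.
  rewrite !(cs_ext _ ext) !(Mf_ext _ ext).
  set A := ~: [set f].
  have MZ0 := MZ Y A n; have MZ1 := MZ Y A n.+1.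
  rewrite big_ord_recr /= in MZ1.
  have K := Kineq (cs0 Y A) (fun k => sz_ge0 _ _ hY) (fun i j ij => cs_mono A hY ij)
    (lt_le_trans ltr01 (cs_ge1 A 0 hY)) (fun k => cs_SLC A hY (leqnn k)) n.
  rewrite cs1 in K.
  set P1 := cs Y A n.+1 in MZ0 MZ1 K *; set P2 := cs Y A n.+2 in MZ0 MZ1 K *.
  set S := \sum_(m < n.+1) cs Y A m in MZ0 MZ1 K *.
  rewrite MZ0 MZ1.
  have P11 : 1 <= P1 by apply: cs_ge1.
  have P21 : 1 <= P2 by apply: cs_ge1.
  have y0 := hY f; have y'0 := hY' f.
  have := mulr_ge0 y0 (ltW (lt_le_trans ltr01 P11)).
  have := mulr_ge0 y'0 (ltW (lt_le_trans ltr01 P11)) => h1 h2.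
  apply: frac_lt; try lra.
  rewrite -[n.+1%:R]/(1 *+ n.+1) mulrSr.
  have : 0 < (Y' f - Y f) * (P1 * P1 - S * (P2 - P1)).
    by apply: mulr_gt0; [rewrite subr_gt0 | lra].
  set N := n%:R; lra.
- move=> X hX z1 z2 hz1 hz.
  have hX0 g : 0 <= X g by apply: ltW.
  have hz2 : 0 <= z2 by apply: le_trans hz1 (ltW hz).
  have pos z : 0 <= z -> 0 < cs (fun g => z * X g) (~: [set e]) n.+2.
    move=> hz0; apply: lt_le_trans ltr01 (cs_ge1 _ _ _) => g.
    by apply: mulr_ge0.
  rewrite !Rfun_cs !mulrA.
  apply: frac_lt; [exact: pos | exact: pos |].
  rewrite !cs_scale.
  have shift z : z * \sum_(j < n.+1) z ^+ j * hs X (~: [set e]) j.+1 =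
      \sum_(j < n.+2) z ^+ j * hs X (~: [set e]) j.
    rewrite [RHS]big_ord_recl hs0 mulr0 add0r big_distrr /=.
    by apply: eq_bigr => j _; rewrite exprS mulrA.
  rewrite !shift.
  apply: MLR => //; [exact: hs0 | exact: hs1 | by move=> k; apply: sz_ge0 | exact: hs_SLC].
Qed.
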